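(* Let $\mathcal{M}=(E,\rho)$ be a $q$-matroid and $V\le E$. Then \[ \mathrm{cyc}(V)=\sum_{C\le V,\ C\text{ a circuit of }\mathcal{M}} C . \] Thus $\mathrm{cyc}(V)$ is an open space and in fact the largest open space contained in $V$. As a consequence, $V$ is independent if and only if $\mathrm{cyc}(V)=0$.
   Context: Let $\mathbb{F}=\mathbb{F}_q$, $E$ a finite-dimensional $\mathbb{F}$-vector space. A $q$-matroid is $\mathcal{M}=(E,\rho)$ with $\rho$ from subspaces of $E$ to $\mathbb{Z}_{\ge0}$ satisfying $0\le\rho(V)\le\dim V$, monotonicity, and submodularity $\rho(V+W)+\rho(V\cap W)\le\rho(V)+\rho(W)$. $V$ is independent if $\rho(V)=\dim V$, dependent otherwise. A circuit is a dependent subspace all of whose proper subspaces are independent. A subspace is open if it is a sum of circuits (the empty sum being $0$). The cyclic core of $V$ is $\mathrm{cyc}(V)=\{x\in V\mid\rho(W)=\rho(V)\text{ for all }W\le V\text{ with }W+\langle x\rangle=V\}$. *)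

(* Defs.v *)
From HB Require Import structures.
From mathcomp Require Import all_boot all_order all_algebra.
Set Implicit Arguments. Unset Strict Implicit. Unset Printing Implicit Defensive.
Import GRing.Theory.
Local Open Scope ring_scope.

(* Over a finite field F, the subspaces of a finite-dimensional F-vector space
   form a finite type (subtype of a matrix type over a finite type). *)
Section FinVspace.
Import vector.VectorInternalTheory.
Variables (F : finFieldType) (vT : vectType F).
HB.instance Definition _ := [Countable of {vspace vT} by <:].
HB.instance Definition _ := [Finite of {vspace vT} by <:].
End FinVspace.

Section QMatroid.
Variables (F : finFieldType) (E : vectType F).

Definition is_qmatroid (rho : {vspace E} -> nat) : Prop :=
  [/\ (forall V, rho V <= \dim V)%N,
      (forall V W, (V <= W)%VS -> rho V <= rho W)%N &
      (forall V W, rho (V + W)%VS + rho (V :&: W)%VS <= rho V + rho W)%N].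

Variable rho : {vspace E} -> nat.

Definition indep (V : {vspace E}) : bool := rho V == \dim V.
Definition dependent (V : {vspace E}) : bool := ~~ indep V.

Definition circuit (C : {vspace E}) : bool :=
  dependent C && [forall D : {vspace E}, ((D <= C)%VS && (D != C)) ==> indep D].

Definition open_space (V : {vspace E}) : Prop :=
  exists s : seq {vspace E}, all circuit s /\ (\sum_(C <- s) C)%VS = V.

Definition cyc (V : {vspace E}) : pred E :=
  fun x => (x \in V) &&
    [forall W : {vspace E}, ((W <= V)%VS && ((W + <[x]>)%VS == V)) ==> (rho W == rho V)].

Definition circ_sum (V : {vspace E}) : {vspace E} :=
  (\sum_(C : {vspace E} | (C <= V)%VS && circuit C) C)%VS.

End QMatroid.

(* Main.v *)
Require Import Defs.
From HB Require Import structures.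
From mathcomp Require Import all_boot all_order all_algebra.
From mathcomp Require Import zify.
Set Implicit Arguments. Unset Strict Implicit. Unset Printing Implicit Defensive.
Import GRing.Theory.
Local Open Scope ring_scope.

Lemma rho_add_le (F : finFieldType) (E : vectType F) (rho : {vspace E} -> nat)
  (Hq : is_qmatroid rho) (A B : {vspace E}) :
  (rho (A + B)%VS <= rho A + \dim B)%N.
Proof.
case: Hq => Hd Hm Hs.
have := Hs A B; have := Hd B; lia.
Qed.

Lemma sub_indep (F : finFieldType) (E : vectType F) (rho : {vspace E} -> nat)
  (Hq : is_qmatroid rho) (J I : {vspace E}) :
  (J <= I)%VS -> indep rho I -> indep rho J.
Proof.
move=> JI /eqP hI; apply/eqP.
have eI : (I :\: J + J)%VS = I by by rewrite addv_diff (addv_idPl JI).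
have := rho_add_le Hq J (I :\: J); rewrite addvC eI.
have := dimv_cap_compl I J; rewrite (capv_idPr JI).
case: Hq => Hd _ _; have := Hd J. move=> a b c; rewrite hI -b in c; apply/eqP; rewrite eqn_leq a /=; by rewrite -(leq_add2r (\dim (I :\: J))) c.
Qed.

Lemma indep0 (F : finFieldType) (E : vectType F) (rho : {vspace E} -> nat)
  (Hq : is_qmatroid rho) : indep rho 0%VS.
Proof.
case: Hq => Hd _ _; have := Hd 0%VS; rewrite /indep dimv0 => h.
by apply/eqP; lia.
Qed.

Lemma circuit_exists (F : finFieldType) (E : vectType F) (rho : {vspace E} -> nat)
  (D : {vspace E}) : dependent rho D -> exists C, (C <= D)%VS && circuit rho C.
Proof.
move=> dD.
have P0 : (D <= D)%VS && dependent rho D by rewrite subvv dD.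
case: (@arg_minnP _ D (fun C => (C <= D)%VS && dependent rho C) (fun C => \dim C) P0) => C /andP[CD dC] minC.
exists C; rewrite CD /circuit dC /=; apply/forallP => D'; apply/implyP.
case/andP=> D'C neq; apply/negPn/negP => dD'.
have := minC D'; rewrite (subv_trans D'C CD) /dependent dD' => /(_ isT).
by rewrite leqNgt (ltn_leqif (dimv_leqif_eq D'C)) neq.
Qed.

Lemma closure_lemma (F : finFieldType) (E : vectType F) (rho : {vspace E} -> nat)
  (Hq : is_qmatroid rho) (A : {vspace E}) (s : seq E) :
  (forall y, y \in s -> rho (A + <[y]>)%VS = rho A) -> rho (A + <<s>>)%VS = rho A.
Proof.
case: Hq => Hd Hm Hs.
elim: s => [|y s IH] h; first by rewrite span_nil addv0.
have IH' := IH (fun z zs => h z (mem_behead (s:=y::s) zs)).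
have hy := h y (mem_head _ _).
rewrite span_cons addvA (addvC A) -addvA.
set A' := (A + <<s>>)%VS in IH' *.
have := Hs A' (A + <[y]>)%VS.
have -> : (A' + (A + <[y]>))%VS = (<[y]> + A')%VS.
  by rewrite /A' addvC -addvA (addvC <[y]>%VS) addvA addvA addvv -addvA (addvC <<s>>%VS) addvA.
have : (rho A <= rho (A' :&: (A + <[y]>))%VS)%N.
  by apply: Hm; rewrite subv_cap addvSl addvSl.
have : (rho A' <= rho (<[y]> + A')%VS)%N by apply: Hm; rewrite addvSr.
lia.
Qed.

Lemma basis_exists (F : finFieldType) (E : vectType F) (rho : {vspace E} -> nat)
  (Hq : is_qmatroid rho) (W : {vspace E}) :
  exists B, [/\ (B <= W)%VS, indep rho B & rho B = rho W].
Proof.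
have P0 : (0 <= W)%VS && indep rho 0%VS by rewrite sub0v indep0.
case: (@arg_maxnP _ 0%VS (fun C => (C <= W)%VS && indep rho C) (fun C => \dim C) P0) => B /andP[BW iB] maxB.
exists B; split => //.
have hcl : forall y, y \in vbasis W -> rho (B + <[y]>)%VS = rho B.
  move=> y /vbasis_mem yW.
  have := Hq; case=> Hd Hm Hs.
  have le1 : (rho B <= rho (B + <[y]>)%VS)%N by apply: Hm; rewrite addvSl.
  case yB: (y \in B); first by rewrite (addv_idPl _) // -memvE.
  have dimS : \dim (B + <[y]>)%VS = (\dim B).+1.
    have := dimv_sum_cap B <[y]>%VS.
    have y0 : y != 0 by apply: contraFneq yB => ->; rewrite mem0v.
    rewrite dim_vline y0.
    have : (B :&: <[y]> = 0)%VS.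
      apply/eqP; rewrite -subv0; apply/subvP => z /memv_capP[zB /vlineP[k zk]].
      rewrite memv0; apply/eqP; move: zB; rewrite zk.
      case: (eqVneq k 0) => [->|k0]; first by rewrite scale0r.
      by move=> /(memvZ (k^-1)); rewrite scalerA mulVf // scale1r yB.
    move=> ->; rewrite dimv0; lia.
  have sBW : (B + <[y]> <= W)%VS by rewrite subv_add BW -memvE.
  have ndep : ~~ indep rho (B + <[y]>)%VS.
    apply/negP => ii; have := maxB _ (introT andP (conj sBW ii)); rewrite dimS; lia.
  move: ndep; rewrite /indep dimS; move/eqP: iB => iB.
  have := Hd (B + <[y]>)%VS; rewrite dimS; lia.
have := closure_lemma Hq hcl.
by rewrite (span_basis (vbasisP W)) (addv_idPr BW).
Qed.

Lemma dim_addline (F : finFieldType) (E : vectType F) (W : {vspace E}) (x : E) :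
  x \notin W -> \dim (W + <[x]>)%VS = (\dim W).+1.
Proof.
move=> xW.
have := dimv_sum_cap W <[x]>%VS.
have x0 : x != 0 by apply: contraNneq xW => ->; rewrite mem0v.
rewrite dim_vline x0.
have : (W :&: <[x]> = 0)%VS.
  apply/eqP; rewrite -subv0; apply/subvP => z /memv_capP[zW /vlineP[k zk]].
  rewrite memv0; apply/eqP; move: zW; rewrite zk.
  case: (eqVneq k 0) => [->|k0]; first by rewrite scale0r.
  by move=> /(memvZ (k^-1)); rewrite scalerA mulVf // scale1r (negbTE xW).
move=> ->; rewrite dimv0; lia.
Qed.

Theorem theorem3p6 (F : finFieldType) (E : vectType F)
    (rho : {vspace E} -> nat) (Hq : is_qmatroid rho) (V : {vspace E}) :
  [/\ cyc rho V =i circ_sum rho V,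
      open_space rho (circ_sum rho V),
      (forall W : {vspace E}, open_space rho W -> (W <= V)%VS ->
         (W <= circ_sum rho V)%VS) &
      (indep rho V <-> cyc rho V =i pred1 0)].
Proof.
have Hq' := Hq; case: Hq' => Hd Hm Hs.
set S := circ_sum rho V.
have SV : (S <= V)%VS by apply/subv_sumP => C /andP[].
have circS : forall C, (C <= V)%VS -> circuit rho C -> (C <= S)%VS.
  by move=> C CV cC; apply: (sumv_sup C) => //; rewrite CV cC.
have h1 : cyc rho V =i S.
  move=> x; rewrite unfold_in /cyc; apply/idP/idP.
  - case/andP => xV /forallP hW; apply: contraT => xS.
    set T := (S + <[x]>)%VS; set K := (V :\: T)%VS; set W := (S + K)%VS.
    have TV : (T <= V)%VS by rewrite subv_add SV -memvE.
    have WV : (W <= V)%VS by rewrite subv_add SV diffvSl.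
    have WxV : (W + <[x]> = V)%VS.
      by rewrite /W -addvA (addvC K) addvA -/T addvC addv_diff (addv_idPl TV).
    have dimT : \dim T = (\dim S).+1 by apply: dim_addline.
    have dimK := dimv_cap_compl V T; rewrite (capv_idPr TV) in dimK.
    have dimW := dimv_sum_cap S K; rewrite -/W in dimW.
    have ltW : (\dim W < \dim V)%N.
      move: dimT dimK dimW; rewrite -/K; lia.
    have xW : x \notin W.
      apply/negP => xW; move: ltW; rewrite -WxV (addv_idPl _) ?ltnn // -memvE //.
    have hr : rho W = rho V by apply/eqP; have := hW W; rewrite WV WxV eqxx.
    have [B [BW iB rB]] := basis_exists Hq W.
    set D := (B + <[x]>)%VS.
    have xB : x \notin B by apply: contra xW => xB; exact: (subvP BW).
    have dimD : \dim D = (\dim B).+1 by apply: dim_addline.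
    have DV : (D <= V)%VS by rewrite subv_add (subv_trans BW WV) -memvE.
    have dD : dependent rho D.
      apply/negP => /eqP iD; have := Hm _ _ DV; move/eqP: iB.
      rewrite iD dimD -hr -rB; lia.
    have [C /andP[CD cC]] := circuit_exists dD.
    have CW : (C <= W)%VS.
      by apply: subv_trans (addvSl S K); apply: circS => //; exact: subv_trans CD DV.
    have DWB : (D :&: W)%VS = B.
      apply/eqP; rewrite eq_sym eqEdim subv_cap addvSl BW /=.
      have : (\dim (D :&: W) < \dim D)%N.
        rewrite (ltn_leqif (dimv_leqif_eq (capvSl D W))).
        apply/negP => /eqP e; have xD : x \in D := subvP (addvSr B _) _ (memv_line x).
        by move: xD; rewrite -e memv_cap (negbTE xW) andbF.
      rewrite dimD ltnS //.
    have CB : (C <= B)%VS by rewrite -DWB subv_cap CD CW.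
    by case/andP: cC => dC _; move: dC; rewrite /dependent (sub_indep Hq CB iB).
  - move=> xS; have xV := subvP SV _ xS; rewrite xV /=.
    apply/forallP => W; apply/implyP => /andP[WV /eqP WxV].
    case xW: (x \in W).
      by move: WxV; rewrite (addv_idPl _) -?memvE // => ->.
    case: (pickP (fun C => ((C <= V)%VS && circuit rho C) && ~~ (C <= W)%VS)) => [C|none]; last first.
      have SW : (S <= W)%VS.
        apply/subv_sumP => C PC; have := none C; rewrite PC /=; exact: negbFE.
      by rewrite (subvP SW _ xS) in xW.
    case/andP => /andP[CV cC] CW.
    have dimVW : \dim V = (\dim W).+1 by rewrite -WxV dim_addline ?xW.
    have CWV : (C + W)%VS = V.
      apply/eqP; rewrite eqEdim subv_add CV WV /= dimVW.
      rewrite (ltn_leqif (dimv_leqif_sup (addvSr C W))) subv_add subvv andbT //.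
    have dimCW := dimv_sum_cap C W; rewrite CWV dimVW in dimCW.
    have iCW : indep rho (C :&: W)%VS.
      case/andP: cC => _ /forallP /(_ (C :&: W)%VS) /implyP; apply.
      rewrite capvSl /=; apply: contra CW => /eqP e; apply/capv_idPl; exact: e.
    have rC : (rho C < \dim C)%N.
      case/andP: cC => dC _; have := Hd C; rewrite leq_eqVlt.
      by move: dC; rewrite /dependent /indep => /negbTE ->.
    have := Hs C W; rewrite CWV (eqP iCW).
    have := Hm _ _ WV; move=> a b; apply/eqP; lia.
split => //.
- exists [seq C <- index_enum {vspace E} | (C <= V)%VS && circuit rho C]; split.
    by apply/allP => C; rewrite mem_filter => /andP[/andP[_ ->]].
  by rewrite big_filter.
- move=> W [s [alls <-]] sV.
  rewrite big_seq; apply: (big_ind (fun X => (X <= S)%VS)) => //.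
  + exact: sub0v.
  + by move=> X Y XS YS; rewrite subv_add XS YS.
  move=> C Cs; apply: circS; last exact: (allP alls).
  apply: subv_trans sV; rewrite (big_rem C Cs) /=; exact: addvSl.
- split.
  + move=> iV x; rewrite h1 inE.
    have S0 : (S <= 0)%VS.
      apply/subv_sumP => C /andP[CV /andP[dC _]].
      by move: dC; rewrite /dependent (sub_indep Hq CV iV).
    apply/idP/idP => [/(subvP S0)|/eqP ->]; first by rewrite memv0.
    exact: mem0v.
  + move=> h; apply: contraT => dV.
    have [C /andP[CV cC]] := circuit_exists dV.
    have C0 : C != 0%VS.
      by apply/eqP => e; move: cC; rewrite e /circuit /dependent (indep0 Hq).
    have := h (vpick C); rewrite h1 inE (subvP (circS C CV cC) _ (memv_pick C)).
    by rewrite vpick0 (negbTE C0).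
Qed.
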